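(* Under the standing assumptions in the context, let $v\in S$ and for an integer $i$ let $A_v^i$ be the set of simple graphs on $[n]$ with degree sequence $\mathbf d$ in which $v$ has exactly $i$ neighbours in $S$. Then for integers $0\le i<d(v)$, $$\frac{|A_v^i|}{|A_v^{i+1}|}=\frac{i+1}{d(v)-i}\cdot\frac{d(\bar S)}{d(S)}\left(1+O\!\left(\frac{\Delta^2}{d(S)}\right)\right).$$
   Context: All asymptotics are as $n\to\infty$. For each $n$, $\mathbf d=(d(1),\dots,d(n))$ is a sequence of integers with $1\le d(1)\le\dots\le d(n)$ and even sum; $M=\sum_i d(i)$, $\Delta=d(n)$, $d(A)=\sum_{i\in A}d(i)$. $S\subseteq[n]$ is a given set, $\bar S=[n]\setminus S$, $\gamma=d(S)/M$. Standing assumptions: there is $\delta=\delta(n)\to0$ with $\delta^{-1}=O(\log\log M)$ and $\Delta^2(\gamma^{-1}\log M)^{12}\le\delta\,d(S)$, and a constant $c>0$ with $\gamma<1-c$. *)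

(* Defs.v *)
From mathcomp Require Import all_boot.
From Stdlib Require Import Reals.
Set Implicit Arguments. Unset Strict Implicit. Unset Printing Implicit Defensive.

Definition simple_graph (n : nat) (E : {set {set 'I_n}}) : bool :=
  [forall e in E, #|e| == 2].

Definition deg (n : nat) (E : {set {set 'I_n}}) (v : 'I_n) : nat :=
  #|[set e in E | v \in e]|.

Definition has_degseq (n : nat) (E : {set {set 'I_n}}) (d : 'I_n -> nat) : bool :=
  [forall v, deg E v == d v].

Definition nbrs_in (n : nat) (E : {set {set 'I_n}}) (v : 'I_n) (S : {set 'I_n}) : nat :=
  #|[set u in S | [set u; v] \in E]|.

Definition A_set (n : nat) (d : 'I_n -> nat) (S : {set 'I_n}) (v : 'I_n) (i : nat)
  : {set {set {set 'I_n}}} :=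
  [set E : {set {set 'I_n}} | [&& simple_graph E, has_degseq E d & nbrs_in E v S == i]].

Definition dsum (n : nat) (d : 'I_n -> nat) (A : {set 'I_n}) : nat :=
  (\sum_(i in A) d i)%N.

Definition Mtot (n : nat) (d : 'I_n -> nat) : nat := (\sum_(i : 'I_n) d i)%N.

(* Delta = maximum degree (= d(n) for a nondecreasing sequence) *)
Definition Dmax (n : nat) (d : 'I_n -> nat) : nat := (\max_(i : 'I_n) d i)%N.

Definition valid_degseq (n : nat) (d : 'I_n -> nat) : Prop :=
  (forall i : 'I_n, (1 <= d i)%N) /\
  (forall i j : 'I_n, (i <= j)%N -> (d i <= d j)%N) /\
  ~~ odd (Mtot d).

(* Main.v *)
Require Import Defs.
From mathcomp Require Import all_boot zify.
From Stdlib Require Import Reals.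
Set Implicit Arguments. Unset Strict Implicit. Unset Printing Implicit Defensive.

Section Graph.
Variable n : nat.
Notation T := 'I_n.
Implicit Types (G : {set {set T}}) (u v w x y : T).

Definition Nb G u := [set y | [set u; y] \in G].

Lemma Nb_sym G u y : (y \in Nb G u) = (u \in Nb G y).
Proof. by rewrite !inE setUC. Qed.

Lemma set2_eq (a b c e : T) :
  ([set a; b] == [set c; e]) = ((a == c) && (b == e)) || ((a == e) && (b == c)).
Proof.
apply/eqP/idP => [H|].
  have : a \in [set c; e] by rewrite -H set21.
  have : b \in [set c; e] by rewrite -H set22.
  have : c \in [set a; b] by rewrite H set21.
  have : e \in [set a; b] by rewrite H set22.
  rewrite !inE.
  by do 4 (case/orP => /eqP ?); subst; rewrite ?eqxx ?orbT.
by case/orP => /andP [/eqP -> /eqP ->] //; rewrite setUC.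
Qed.

Lemma simpleP G : simple_graph G -> forall e, e \in G -> #|e| = 2.
Proof. by move=> /forall_inP H e /H /eqP. Qed.

Lemma Nb_neq G u y : simple_graph G -> y \in Nb G u -> u != y.
Proof.
move=> sG; rewrite inE => /(simpleP sG); rewrite cards2; by case: (u != y).
Qed.

Lemma deg_Nb G u : simple_graph G -> deg G u = #|Nb G u|.
Proof.
move=> sG; rewrite /deg.
have inj : injective (fun y => [set u; y]).
  move=> y1 y2 /= H.
  have := set2_eq u y1 u y2; rewrite H eqxx eqxx /= => /esym.
  by case/orP => [/eqP //| /andP [/eqP -> /eqP ->]].
rewrite -(card_imset _ inj); apply: eq_card => e; rewrite inE; apply/andP/imsetP.
  case=> eG ue; have := simpleP sG eG => /eqP /cards2P [a [b [ab ee]]].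
  subst e; move: ue; rewrite !inE => /orP [] /eqP ->.
    by exists b; rewrite // inE.
  by exists a; rewrite ?inE setUC.
by case=> y; rewrite inE => yG ->; rewrite set21.
Qed.

Lemma degE G u : deg G u = \sum_(e in G) (u \in e).
Proof.
rewrite /deg -sum1_card.
rewrite (eq_bigl (fun e => (e \in G) && (u \in e))); last by move=> e; rewrite inE.
by rewrite big_mkcondr; apply: eq_bigr => e _; case: (u \in e).
Qed.

Definition swap G (a1 a2 b1 b2 : {set T}) := b1 |: (b2 |: ((G :\ a1) :\ a2)).

Lemma swapK G a1 a2 b1 b2 :
  a1 \in G -> a2 \in G -> b1 \notin G -> b2 \notin G ->
  a1 != b1 -> a1 != b2 -> a2 != b1 -> a2 != b2 ->
  swap (swap G a1 a2 b1 b2) b1 b2 a1 a2 = G.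
Proof.
move=> a1G a2G b1G b2G n11 n12 n21 n22.
apply/setP => e; rewrite !inE.
have [->|e1] := eqVneq e a1; first by rewrite /= a1G.
have [->|e2] := eqVneq e a2; first by rewrite /= ?orbT.
have [->|f1] := eqVneq e b1.
  by rewrite /= (negbTE b1G) ?(eq_sym b1) ?(negbTE n21) ?(negbTE n11) /= ?andbF.
have [->|f2] := eqVneq e b2.
  by rewrite /= (negbTE b2G) ?(eq_sym b2) ?(negbTE n22) ?(negbTE n12) /= ?andbF.
by rewrite /= ?(negbTE f1) ?(negbTE f2) ?(negbTE e1) ?(negbTE e2) /= ?f1 ?f2 ?e1 ?e2.
Qed.

Lemma swap_mem G a1 a2 b1 b2 :
  a1 != b1 -> a1 != b2 -> a2 != b1 -> a2 != b2 ->
  [/\ b1 \in swap G a1 a2 b1 b2, b2 \in swap G a1 a2 b1 b2,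
      a1 \notin swap G a1 a2 b1 b2 & a2 \notin swap G a1 a2 b1 b2].
Proof.
move=> n11 n12 n21 n22; rewrite !inE !eqxx /= orbT; split=> //.
  by rewrite (negbTE n11) (negbTE n12) /= andbF.
by rewrite (negbTE n21) (negbTE n22).
Qed.

Lemma swap_simple G (a1 a2 b1 b2 : {set T}) :
  simple_graph G -> #|b1| = 2 -> #|b2| = 2 -> simple_graph (swap G a1 a2 b1 b2).
Proof.
move=> sG h1 h2; apply/forall_inP => e; rewrite !inE.
case/orP => [/eqP->|]; first by rewrite h1.
case/orP => [/eqP->|]; first by rewrite h2.
by case/andP => _ /andP [_ /(simpleP sG) ->].
Qed.

Lemma swap_deg G a1 a2 b1 b2 u :
  a1 \in G -> a2 \in G -> a1 != a2 -> b1 \notin G -> b2 \notin G -> b1 != b2 ->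
  (u \in a1) + (u \in a2) = (u \in b1) + (u \in b2) ->
  deg (swap G a1 a2 b1 b2) u = deg G u.
Proof.
move=> a1G a2G n12 b1G b2G m12 E.
rewrite !degE /swap big_setU1 /=; last first.
  by rewrite !inE negb_or m12 /= (negbTE b1G) !andbF.
rewrite big_setU1 /=; last by rewrite !inE (negbTE b2G) !andbF.
rewrite (big_setD1 a1 a1G) (@big_setD1 _ _ _ _ a2 (G :\ a1)) /=; last first.
  by rewrite !inE a2G eq_sym n12.
by rewrite !addnA E.
Qed.

End Graph.

Section Switch.
Variable n : nat.
Notation T := 'I_n.
Variable d : T -> nat.
Variable S : {set T}.
Variable v : T.
Hypothesis vS : v \in S.
Implicit Types (G : {set {set T}}) (u w x y : T).

Definition dist4 w x y :=
  [&& v != w, v != x, v != y, w != x, w != y, x != y, w \notin S & x \in S].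
Definition fwd G w x y :=
  [&& dist4 w x y, [set v; w] \in G, [set x; y] \in G, [set v; x] \notin G
    & [set w; y] \notin G].
Definition bwd G w x y :=
  [&& dist4 w x y, [set v; x] \in G, [set w; y] \in G, [set v; w] \notin G
    & [set x; y] \notin G].
Definition sw G w x y := swap G [set v; w] [set x; y] [set v; x] [set w; y].
Definition unsw G w x y := swap G [set v; x] [set w; y] [set v; w] [set x; y].

Lemma orb_nat (a b : bool) : ~~ (a && b) -> ((a || b) : nat) = a + b.
Proof. by case: a; case: b. Qed.

Lemma neq_and u a b : a != b -> ~~ ((u == a) && (u == b)).
Proof. by move=> ab; apply/negP => /andP [/eqP e1 /eqP e2]; rewrite -e1 -e2 eqxx in ab. Qed.

Lemma dist_facts w x y : dist4 w x y ->
  [/\ [set v; w] != [set v; x], [set v; w] != [set w; y],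
      [set x; y] != [set v; x], [set x; y] != [set w; y] &
   [/\ [set v; w] != [set x; y], [set v; x] != [set w; y],
      #|[set v; w]| = 2, #|[set x; y]| = 2 &
   [/\ #|[set v; x]| = 2, #|[set w; y]| = 2 &
     forall u, (u \in [set v; w]) + (u \in [set x; y]) =
               (u \in [set v; x]) + (u \in [set w; y])]]].
Proof.
case/and5P => vw vx vy wx /and4P [wy xy wS xS].
have wv : w != v by rewrite eq_sym.
have xv : x != v by rewrite eq_sym.
have yv : y != v by rewrite eq_sym.
have xw : x != w by rewrite eq_sym.
have yw : y != w by rewrite eq_sym.
have yx : y != x by rewrite eq_sym.
rewrite !set2_eq !cards2 !eqxx /=
  ?(negbTE vw, negbTE vx, negbTE vy, negbTE wx, negbTE wy, negbTE xy,
    negbTE wv, negbTE xv, negbTE yv, negbTE xw, negbTE yw, negbTE yx) /=.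
split=> //; split=> //; split=> // u.
rewrite !inE !orb_nat ?neq_and //.
by rewrite addnACA.
Qed.

Lemma fwd_sw G w x y : fwd G w x y ->
  bwd (sw G w x y) w x y /\ unsw (sw G w x y) w x y = G.
Proof.
case/and5P => D h1 h2 h3 h4.
have [n11 n12 n21 n22 _] := dist_facts D.
have [m1 m2 m3 m4] := swap_mem G n11 n12 n21 n22.
split; last by apply: swapK.
by rewrite /bwd D m1 m2 m3 m4.
Qed.

Lemma bwd_unsw G w x y : bwd G w x y ->
  fwd (unsw G w x y) w x y /\ sw (unsw G w x y) w x y = G.
Proof.
case/and5P => D h1 h2 h3 h4.
have [n11 n12 n21 n22 _] := dist_facts D.
have n11' : [set v; x] != [set v; w] by rewrite eq_sym.
have n12' : [set v; x] != [set x; y] by rewrite eq_sym.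
have n21' : [set w; y] != [set v; w] by rewrite eq_sym.
have n22' : [set w; y] != [set x; y] by rewrite eq_sym.
have [m1 m2 m3 m4] := swap_mem G n11' n12' n21' n22'.
split; last by apply: swapK.
by rewrite /fwd D m1 m2 m3 m4.
Qed.

Lemma nbrs_sw G w x y : fwd G w x y ->
  nbrs_in (sw G w x y) v S = (nbrs_in G v S).+1.
Proof.
case/and5P => D h1 h2 h3 h4.
move: (D) => /and5P [vw vx vy wx /and4P [wy xy wS xS]].
have wv : w != v by rewrite eq_sym.
have xv : x != v by rewrite eq_sym.
have yv : y != v by rewrite eq_sym.
have xw : x != w by rewrite eq_sym.
have yw : y != w by rewrite eq_sym.
have yx : y != x by rewrite eq_sym.
rewrite /nbrs_in.
have -> : [set u in S | [set u; v] \in sw G w x y] =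
          x |: [set u in S | [set u; v] \in G].
  apply/setP => u; rewrite /sw !inE !set2_eq !eqxx /=
  ?(negbTE vw, negbTE vx, negbTE vy, negbTE wx, negbTE wy, negbTE xy,
    negbTE wv, negbTE xv, negbTE yv, negbTE xw, negbTE yw, negbTE yx) /= ?andbF /=.
  have [->|ux] := eqVneq u x; first by rewrite xS.
  have [uS|uS] := boolP (u \in S); last by [].
  have uw : u != w by apply: contraNneq wS => <-.
  by rewrite /= andbT (negbTE uw).
rewrite cardsU1 inE xS /= setUC (negbTE h3).
by [].
Qed.

Lemma A_fwd G w x y i : G \in A_set d S v i -> fwd G w x y ->
  sw G w x y \in A_set d S v i.+1.
Proof.
rewrite !inE => /and3P [sG /forallP dG /eqP nG] F.
have F' := F; case/and5P: F' => D h1 h2 h3 h4.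
have [n11 n12 n21 n22 [n1 n2 c1 c2 [c3 c4 inc]]] := dist_facts D.
rewrite (nbrs_sw F) nG eqxx andbT swap_simple //=.
apply/forallP => u; rewrite swap_deg //; exact: dG.
Qed.

Lemma A_bwd G w x y i : G \in A_set d S v i.+1 -> bwd G w x y ->
  unsw G w x y \in A_set d S v i.
Proof.
rewrite !inE => /and3P [sG /forallP dG /eqP nG] B.
have [F E] := bwd_unsw B.
have B' := B; case/and5P: B' => D h1 h2 h3 h4.
have [n11 n12 n21 n22 [n1 n2 c1 c2 [c3 c4 inc]]] := dist_facts D.
have sH : simple_graph (unsw G w x y) by apply: swap_simple.
have := nbrs_sw F; rewrite E nG => -[<-].
rewrite eqxx andbT sH /=.
case/and5P: F => _ k1 k2 k3 k4.
apply/forallP => u; rewrite -(eqP (dG u)) -{2}E /sw swap_deg //.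
Qed.

End Switch.

Lemma sumB (K : finType) (A : {pred K}) : \sum_u (u \in A) = #|A|.
Proof. by rewrite -sum1_card [RHS]big_mkcond; apply: eq_bigr => u _; case: (u \in A). Qed.

Lemma sumBF (K : finType) (A : {pred K}) F : \sum_u (u \in A) * F u = \sum_(u in A) F u.
Proof. by rewrite [RHS]big_mkcond; apply: eq_bigr => u _; case: (u \in A); rewrite ?mul1n. Qed.

Lemma sum_le_const (K : finType) (A : {pred K}) F B :
  (forall u, u \in A -> F u <= B) -> \sum_u (u \in A) * F u <= #|A| * B.
Proof. by move=> H; rewrite sumBF -sum_nat_const; apply: leq_sum. Qed.

Lemma sum_eq1 (K : finType) (a : K) F : \sum_u (u == a) * F u = F a.
Proof.
rewrite (bigD1 a) //= eqxx mul1n big1 ?addn0 // => u /negbTE ->; by [].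
Qed.

Lemma inj_le (K : finType) (X Y : {set K}) f g :
  (forall x, x \in X -> f x \in Y) -> (forall x, x \in X -> g (f x) = x) ->
  #|X| <= #|Y|.
Proof.
move=> fXY gK; rewrite -(@card_in_imset _ _ f X); last first.
  by move=> a b aX bX e; rewrite -(gK a aX) e gK.
apply: subset_leq_card; apply/subsetP => _ /imsetP [x xX ->]; exact: fXY.
Qed.

Lemma sum_card (K : finType) (A : {set K}) (P : pred K) :
  \sum_(G in A) (P G : nat) = #|[set G in A | P G]|.
Proof.
rewrite -sum1_card [RHS](eq_bigl (fun G => (G \in A) && P G)); last by move=> G; rewrite inE.
by rewrite big_mkcondr; apply: eq_bigr => G _; case: (P G).
Qed.

Section Count.
Variable n : nat.
Notation T := 'I_n.
Variable d : T -> nat.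
Variable S : {set T}.
Variable v : T.
Hypothesis vS : v \in S.
Variable i : nat.
Notation Dl := (Dmax d).
Implicit Types (G : {set {set T}}) (u w x y : T).

Lemma d_le u : d u <= Dl.
Proof. exact: leq_bigmax. Qed.

Lemma Nb_card G j u : G \in A_set d S v j -> #|Nb G u| = d u.
Proof.
rewrite inE => /and3P [sG /forallP dG _].
by rewrite -deg_Nb // (eqP (dG u)).
Qed.

Lemma Nb_le G j u : G \in A_set d S v j -> #|Nb G u| <= Dl.
Proof. by move=> H; rewrite (Nb_card _ H) d_le. Qed.

Lemma A_simple G j : G \in A_set d S v j -> simple_graph G.
Proof. by rewrite inE => /and3P []. Qed.

Lemma nbrs_Nb G j : G \in A_set d S v j -> #|Nb G v :&: S| = j.
Proof.
rewrite inE => /and3P [_ _ /eqP <-]; rewrite /nbrs_in; apply: eq_card => u.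
by rewrite !inE setUC andbC.
Qed.

Lemma DD_ge : Dl <= Dl * Dl.
Proof. by case: Dl => // k; rewrite leq_pmulr. Qed.

Definition fcount G := \sum_w \sum_x \sum_y (fwd S v G w x y : nat).
Definition bcount G := \sum_w \sum_x \sum_y (bwd S v G w x y : nat).

Lemma double_count :
  \sum_(G in A_set d S v i) fcount G = \sum_(G in A_set d S v i.+1) bcount G.
Proof.
rewrite /fcount /bcount.
rewrite exchange_big [RHS]exchange_big; apply: eq_bigr => w _.
rewrite exchange_big [RHS]exchange_big; apply: eq_bigr => x _.
rewrite exchange_big [RHS]exchange_big; apply: eq_bigr => y _.
rewrite !sum_card; apply/eqP; rewrite eqn_leq; apply/andP; split.
  apply: (@inj_le _ _ _ (fun G => sw v G w x y) (fun G => unsw v G w x y)).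
    move=> G; rewrite in_set => /andP [GA F]; rewrite in_set (A_fwd GA F) /=.
    by case: (fwd_sw F).
  by move=> G; rewrite in_set => /andP [GA F]; case: (fwd_sw F).
apply: (@inj_le _ _ _ (fun G => unsw v G w x y) (fun G => sw v G w x y)).
  move=> G; rewrite in_set => /andP [GA F]; rewrite in_set (A_bwd GA F) /=.
  by case: (bwd_unsw F).
by move=> G; rewrite in_set => /andP [GA F]; case: (bwd_unsw F).
Qed.


Lemma base_sum G j (A : {set T}) (B : T -> {set T}) (S0 : {set T}) :
  G \in A_set d S v j ->
  (forall x, B x = Nb G x) ->
  \sum_w \sum_x \sum_y ((w \in A) * ((x \in S0) * (y \in B x))) = #|A| * dsum d S0.
Proof.
move=> GA HB.
rewrite -sumB big_distrl /=; apply: eq_bigr => w _.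
rewrite /dsum -sumBF big_distrr /=; apply: eq_bigr => x _.
by rewrite -big_distrr -big_distrr /= sumB HB (Nb_card _ GA).
Qed.

Lemma W_card G : G \in A_set d S v i -> #|Nb G v :\: S| = d v - i.
Proof.
move=> GA; by rewrite -(Nb_card v GA) -(cardsID S (Nb G v)) (nbrs_Nb GA) addKn.
Qed.

Lemma fcount_ub G : G \in A_set d S v i -> fcount G <= (d v - i) * dsum d S.
Proof.
move=> GA; rewrite -(W_card GA) -(@base_sum G i (Nb G v :\: S) (Nb G) S GA) //.
apply: leq_sum => w _; apply: leq_sum => x _; apply: leq_sum => y _.
case F : (fwd S v G w x y) => //.
case/and5P: F => /and5P [_ _ _ _ /and4P [_ _ wS xS]] h1 h2 _ _.
by rewrite !inE h1 h2 wS xS.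
Qed.


Lemma sumsum_B (F : T -> nat) (B : T -> {set T}) :
  \sum_x \sum_y F x * (y \in B x) = \sum_x F x * #|B x|.
Proof. by apply: eq_bigr => x _; rewrite -big_distrr /= sumB. Qed.

Lemma bad_sums G j (w : T) : G \in A_set d S v j ->
  [/\ \sum_x \sum_y (x == v) * (y \in Nb G x) <= Dl * Dl,
      \sum_x \sum_y (x \in Nb G v) * (y \in Nb G x) <= Dl * Dl,
      \sum_x \sum_y (y \in Nb G w) * (y \in Nb G x) <= Dl * Dl &
      \sum_x \sum_y (y == w) * (y \in Nb G x) <= Dl * Dl].
Proof.
move=> GA; split.
- rewrite sumsum_B sum_eq1; apply: leq_trans DD_ge; exact: Nb_le GA.
- rewrite sumsum_B.
  apply: leq_trans (@sum_le_const _ (Nb G v) (fun x => #|Nb G x|) Dl _) _.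
    by move=> u _; exact: Nb_le GA.
  by rewrite leq_mul2r (Nb_le _ GA) orbT.
- rewrite exchange_big /=.
  rewrite (eq_bigr (fun y => \sum_x (y \in Nb G w) * (x \in Nb G y))); last first.
    by move=> y _; apply: eq_bigr => x _; rewrite [y \in Nb G x]Nb_sym.
  rewrite sumsum_B.
  apply: leq_trans (@sum_le_const _ (Nb G w) (fun y => #|Nb G y|) Dl _) _.
    by move=> u _; exact: Nb_le GA.
  by rewrite leq_mul2r (Nb_le _ GA) orbT.
- rewrite (eq_bigr (fun x => (x \in Nb G w) : nat)); last first.
    by move=> x _; rewrite (sum_eq1 w (fun y => (y \in Nb G x) : nat)) Nb_sym.
  rewrite sumB; apply: leq_trans DD_ge; exact: Nb_le GA.
Qed.


Definition fbad G w x y :=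
  (x == v) * (y \in Nb G x) + (x \in Nb G v) * (y \in Nb G x) +
  (y \in Nb G w) * (y \in Nb G x) + (y == w) * (y \in Nb G x).

Lemma fbad_sum G w : G \in A_set d S v i ->
  \sum_x \sum_y fbad G w x y <= 4 * (Dl * Dl).
Proof.
move=> GA; have [h1 h2 h3 h4] := bad_sums w GA.
rewrite /fbad.
rewrite (eq_bigr (fun x => \sum_y (x == v) * (y \in Nb G x) + \sum_y (x \in Nb G v) * (y \in Nb G x) +
  \sum_y (y \in Nb G w) * (y \in Nb G x) + \sum_y (y == w) * (y \in Nb G x))); last first.
  by move=> x _; rewrite !big_split.
rewrite !big_split /=.
apply: leq_trans (leq_add (leq_add (leq_add h1 h2) h3) h4) _.
set X := Dl * Dl; lia.
Qed.

Lemma fwd_pt G w x y : G \in A_set d S v i ->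
  (w \in Nb G v :\: S) * ((x \in S) * (y \in Nb G x)) <=
  fwd S v G w x y + (w \in Nb G v :\: S) * fbad G w x y.
Proof.
move=> GA; have sG := A_simple GA.
case: (boolP (w \in Nb G v :\: S)) => wW //=.
case: (boolP (x \in S)) => xS //=.
case: (boolP (y \in Nb G x)) => yx //=.
rewrite /fbad yx /= !muln1 !mul1n.
have [->|xv] := eqVneq x v; first by rewrite !addn_gt0 /= ?orbT.
have [xNv|xNv] := boolP (x \in Nb G v); first by rewrite !addn_gt0 /= ?orbT.
have [yNw|yNw] := boolP (y \in Nb G w); first by rewrite !addn_gt0 /= ?orbT.
have [->|yw] := eqVneq y w; first by rewrite !addn_gt0 /= ?orbT.
suff -> : fwd S v G w x y by [].
move: wW; rewrite !inE => /andP [wS vwG].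
have vw : v != w by apply: (Nb_neq sG); rewrite inE.
have xy : x != y by apply: (Nb_neq sG).
have vy : v != y.
  by apply: contraNneq xNv => ->; rewrite -Nb_sym.
have wx : w != x by apply: contraNneq wS => ->.
rewrite /fwd /dist4 vw eq_sym xv vy wx eq_sym yw xy wS xS vwG /=.
move: yx xNv yNw; rewrite !inE => -> -> -> //.
Qed.

Lemma fcount_lb G : G \in A_set d S v i ->
  (d v - i) * dsum d S <= fcount G + (d v - i) * (4 * (Dl * Dl)).
Proof.
move=> GA; rewrite -(W_card GA) -(@base_sum G i (Nb G v :\: S) (Nb G) S GA) //.
apply: (@leq_trans (\sum_w \sum_x \sum_y (fwd S v G w x y + (w \in Nb G v :\: S) * fbad G w x y))).
  by apply: leq_sum => w _; apply: leq_sum => x _; apply: leq_sum => y _; exact: fwd_pt.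
rewrite (eq_bigr (fun w => \sum_x \sum_y (fwd S v G w x y : nat) +
     (w \in Nb G v :\: S) * \sum_x \sum_y fbad G w x y)); last first.
  move=> w _; rewrite big_distrr -big_split /=; apply: eq_bigr => x _.
  by rewrite big_distrr -big_split.
rewrite big_split leq_add2l /=.
apply: sum_le_const => w _; exact: fbad_sum.
Qed.


Definition bbad G x w y :=
  (w \in Nb G v) * (y \in Nb G w) + (y \in Nb G x) * (y \in Nb G w) +
  (y == x) * (y \in Nb G w).

Lemma bbad_sum G x : G \in A_set d S v i.+1 ->
  \sum_w \sum_y bbad G x w y <= 3 * (Dl * Dl).
Proof.
move=> GA; have [_ h2 h3 h4] := bad_sums x GA.
rewrite /bbad.
rewrite (eq_bigr (fun w => \sum_y (w \in Nb G v) * (y \in Nb G w) +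
  \sum_y (y \in Nb G x) * (y \in Nb G w) + \sum_y (y == x) * (y \in Nb G w))); last first.
  by move=> w _; rewrite !big_split.
rewrite !big_split /=.
apply: leq_trans (leq_add (leq_add h2 h3) h4) _.
set X := Dl * Dl; lia.
Qed.

Lemma bwd_pt G w x y : G \in A_set d S v i.+1 ->
  (x \in Nb G v :&: S) * ((w \in ~: S) * (y \in Nb G w)) <=
  bwd S v G w x y + (x \in Nb G v :&: S) * bbad G x w y.
Proof.
move=> GA; have sG := A_simple GA.
case: (boolP (x \in Nb G v :&: S)) => xX //=.
case: (boolP (w \in ~: S)) => wS //=.
case: (boolP (y \in Nb G w)) => yw //=.
rewrite /bbad yw /= !muln1 !mul1n.
have [wNv|wNv] := boolP (w \in Nb G v); first by rewrite !addn_gt0 /= ?orbT.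
have [yNx|yNx] := boolP (y \in Nb G x); first by rewrite !addn_gt0 /= ?orbT.
have [->|yx] := eqVneq y x; first by rewrite !addn_gt0 /= ?orbT.
suff -> : bwd S v G w x y by [].
move: xX wS; rewrite !inE => /andP [vxG xS] wS.
have vx : v != x by apply: (Nb_neq sG); rewrite inE.
have wy : w != y by apply: (Nb_neq sG).
have vy : v != y.
  by apply: contraNneq wNv => ->; rewrite -Nb_sym.
have wx : w != x by apply: contraNneq wS => ->.
have vw : v != w by apply: contraNneq wS => <-.
rewrite /bwd /dist4 vw vx vy wx wy eq_sym yx wS xS vxG /=.
move: yw wNv yNx; rewrite !inE => -> -> -> //.
Qed.

Lemma X_card G : G \in A_set d S v i.+1 -> #|Nb G v :&: S| = i + 1.
Proof. by move=> GA; rewrite (nbrs_Nb GA) addn1. Qed.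

Lemma bcount_swap G : bcount G = \sum_x \sum_w \sum_y (bwd S v G w x y : nat).
Proof. by rewrite /bcount exchange_big. Qed.

Lemma bcount_ub G : G \in A_set d S v i.+1 -> bcount G <= (i + 1) * dsum d (~: S).
Proof.
move=> GA; rewrite bcount_swap -(X_card GA) -(@base_sum G i.+1 (Nb G v :&: S) (Nb G) (~: S) GA) //.
apply: leq_sum => x _; apply: leq_sum => w _; apply: leq_sum => y _.
case F : (bwd S v G w x y) => //.
case/and5P: F => /and5P [_ _ _ _ /and4P [_ _ wS xS]] h1 h2 _ _.
by rewrite !inE h1 h2 wS xS.
Qed.

Lemma bcount_lb G : G \in A_set d S v i.+1 ->
  (i + 1) * dsum d (~: S) <= bcount G + (i + 1) * (3 * (Dl * Dl)).
Proof.
move=> GA; rewrite bcount_swap -(X_card GA) -(@base_sum G i.+1 (Nb G v :&: S) (Nb G) (~: S) GA) //.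
apply: (@leq_trans (\sum_x \sum_w \sum_y (bwd S v G w x y + (x \in Nb G v :&: S) * bbad G x w y))).
  by apply: leq_sum => x _; apply: leq_sum => w _; apply: leq_sum => y _; exact: bwd_pt.
rewrite (eq_bigr (fun x => \sum_w \sum_y (bwd S v G w x y : nat) +
     (x \in Nb G v :&: S) * \sum_w \sum_y bbad G x w y)); last first.
  move=> x _; rewrite big_distrr -big_split /=; apply: eq_bigr => w _.
  by rewrite big_distrr -big_split.
rewrite big_split leq_add2l /=.
apply: sum_le_const => x _; exact: bbad_sum.
Qed.


Lemma main_nat : exists F,
  [/\ #|A_set d S v i| * ((d v - i) * dsum d S) <=
        F + #|A_set d S v i| * ((d v - i) * (4 * (Dl * Dl))),
      F <= #|A_set d S v i| * ((d v - i) * dsum d S),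
      #|A_set d S v i.+1| * ((i + 1) * dsum d (~: S)) <=
        F + #|A_set d S v i.+1| * ((i + 1) * (3 * (Dl * Dl))) &
      F <= #|A_set d S v i.+1| * ((i + 1) * dsum d (~: S))].
Proof.
exists (\sum_(G in A_set d S v i) fcount G); split.
- rewrite -!sum_nat_const -big_split; apply: leq_sum => G GA; exact: fcount_lb.
- rewrite -sum_nat_const; apply: leq_sum => G GA; exact: fcount_ub.
- rewrite double_count -!sum_nat_const -big_split; apply: leq_sum => G GA; exact: bcount_lb.
- rewrite double_count -sum_nat_const; apply: leq_sum => G GA; exact: bcount_ub.
Qed.

End Count.

Lemma dsum_split n (d : 'I_n -> nat) (S : {set 'I_n}) : dsum d S + dsum d (~: S) = Mtot d.
Proof.
rewrite /Mtot (bigID (fun i => i \in S)) /=; congr (_ + _); apply: eq_bigl => i; by rewrite ?inE.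
Qed.

Lemma dsum_ge n (d : 'I_n -> nat) (S : {set 'I_n}) v : v \in S -> d v <= dsum d S.
Proof. move=> vS; rewrite /dsum (bigD1 v vS) /=; exact: leq_addr. Qed.

From Stdlib Require Import Lra Psatz.
Local Open Scope R_scope.

Lemma real_core (a b p q s t D F c : R) :
  0 <= a -> 0 <= b -> 0 < p -> 0 < q -> 0 < s -> 0 <= D -> 8 * D <= s ->
  0 < c -> c * s <= t ->
  a * (p * s) <= F + a * (p * (4 * D)) -> F <= a * (p * s) ->
  b * (q * t) <= F + b * (q * (3 * D)) -> F <= b * (q * t) ->
  exists eps, Rabs eps <= (8 + 3 / c) * (D / s) /\
    a = q / p * (t / s) * (1 + eps) * b.
Proof.
intros ha hb hp hq hs hD h8 hc hct H1 H2 H3 H4.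
assert (ht : 0 < t) by nra.
assert (hr : 0 <= D / s) by (unfold Rdiv; apply Rmult_le_pos; [lra| left; apply Rinv_0_lt_compat; lra]).
set r := D / s in hr *.
assert (hDr : D = r * s) by (unfold r; field; lra).
assert (hr8 : r <= / 8).
{ unfold r. apply (Rmult_le_reg_r s); [lra|]. unfold Rdiv. rewrite Rmult_assoc Rinv_l; lra. }
assert (h3c : 0 < 3 / c) by (unfold Rdiv; apply Rmult_lt_0_compat; [lra| apply Rinv_0_lt_compat; lra]).
destruct (Req_dec b 0) as [b0|bpos].
- subst b. exists 0. split.
  + rewrite Rabs_R0. apply Rmult_le_pos; lra.
  + assert (a * p * (s - 4 * D) <= 0) by nra.
    assert (a <= 0).
    { destruct (Rle_dec a 0) as [|na]; [assumption|].
      assert (0 < a * p * (s - 4 * D)).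
      { apply Rmult_lt_0_compat; [apply Rmult_lt_0_compat|]; lra. }
      lra. }
    assert (a = 0) by lra. subst a. ring.
- assert (hb' : 0 < b) by lra.
  set X := b * (q * t). set Y := a * (p * s).
  assert (hX : 0 < X) by (unfold X; apply Rmult_lt_0_compat; [lra|apply Rmult_lt_0_compat; lra]).
  assert (hY : 0 <= Y) by (unfold Y; apply Rmult_le_pos; [lra|apply Rmult_le_pos; lra]).
  exists (Y / X - 1). split.
  + assert (HY1 : Y - X <= 4 * r * Y).
    { unfold Y, X. rewrite hDr in H1. nra. }
    assert (HY2 : Y <= 2 * X) by nra.
    assert (Hup : Y - X <= 8 * r * X) by nra.
    assert (Hlo : X - Y <= 3 / c * r * X).
    { assert (X - Y <= 3 * r * (b * q * s)) by (unfold X, Y; rewrite hDr in H3; nra).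
      assert (3 * r * (b * q * s) <= 3 / c * r * X).
      { unfold X. unfold Rdiv.
        assert (3 * r * (b * q * s) = 3 * / c * r * (b * q * (c * s))) by (field; lra).
        rewrite H0. apply Rmult_le_compat_l.
        - apply Rmult_le_pos; [apply Rmult_le_pos|]; [lra| left; apply Rinv_0_lt_compat; lra| lra].
        - assert (0 <= b * q) by nra. nra. }
      lra. }
    assert (E : Y / X - 1 = (Y - X) / X) by (field; lra).
    rewrite E. apply Rabs_le. split.
    * apply (Rmult_le_reg_r X); [lra|]. unfold Rdiv. rewrite Rmult_assoc Rinv_l; try lra.
      nra.
    * apply (Rmult_le_reg_r X); [lra|]. unfold Rdiv. rewrite Rmult_assoc Rinv_l; try lra.
      nra.
  + unfold X, Y. field. repeat split; lra.
Qed.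

Lemma ln_nonpos x : x <= 0 -> ln x = 0.
Proof. intros h; unfold ln; destruct (Rlt_dec 0 x); [exfalso; lra|reflexivity]. Qed.

Lemma ln2_lt1 : ln 2 < 1.
Proof.
pose proof (exp_ineq1 1 ltac:(lra)).
assert (ln 2 < ln (exp 1)) by (apply ln_increasing; lra).
rewrite ln_exp in H0. exact H0.
Qed.

Lemma lnM_ge1 (M : nat) (K dl : R) : (1 <= M)%nat -> 0 < dl -> dl < / (Rabs K + 1) ->
  / dl <= K * ln (ln (INR M)) -> 1 <= ln (INR M).
Proof.
intros HM hd hdl Hk.
destruct (Rle_dec 1 (ln (INR M))) as [|Hlt]; [assumption|exfalso].
assert (Hb : Rabs (ln (ln (INR M))) <= 1).
{ destruct (Nat.eq_dec M 1) as [->|HM2].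
  - simpl. rewrite ln_1 (@ln_nonpos 0%R (Rle_refl _)) Rabs_R0; lra.
  - assert (H2 : 2 <= INR M) by (replace 2 with (INR 2) by (simpl; ring); apply le_INR; lia).
    assert (Hl2 : ln 2 <= ln (INR M)).
    { destruct (Req_dec (INR M) 2) as [e|ne]; [rewrite e; lra|].
      left; apply ln_increasing; lra. }
    pose proof ln_lt_2. pose proof ln2_lt1.
    assert (Hlow : ln (/ 2) < ln (ln (INR M))) by (apply ln_increasing; lra).
    pose proof (ln_Rinv 2 ltac:(lra)) as Hr2. rewrite Hr2 in Hlow.
    assert (Hup : ln (ln (INR M)) < ln 1) by (apply ln_increasing; lra).
    rewrite ln_1 in Hup.
    apply Rabs_le; lra. }
assert (HK : K * ln (ln (INR M)) <= Rabs K).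
{ apply Rle_trans with (Rabs (K * ln (ln (INR M)))); [apply Rle_abs|].
  rewrite Rabs_mult. pose proof (Rabs_pos K). pose proof (Rabs_pos (ln (ln (INR M)))). nra. }
assert (Hinv : Rabs K + 1 < / dl).
{ pose proof (Rabs_pos K).
  rewrite -(Rinv_inv (Rabs K + 1)). apply Rinv_lt_contravar; [|assumption].
  apply Rmult_lt_0_compat; [assumption| apply Rinv_0_lt_compat; lra]. }
lra.
Qed.
Local Close Scope R_scope.

Theorem lemma3p1
  (d : forall n : nat, 'I_n -> nat) (S : forall n : nat, {set 'I_n})
  (Hd : forall n, valid_degseq (d n))
  (* delta(n) -> 0, delta^{-1} = O(log log M), Delta^2 (gamma^{-1} log M)^12 <= delta d(S) *)
  (Hdelta : exists delta : nat -> R,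
      Un_cv delta 0%R /\
      (exists K : R, exists N0 : nat, forall n, (N0 <= n)%N ->
          (0 < delta n)%R /\
          (/ delta n <= K * ln (ln (INR (Mtot (d n)))))%R) /\
      (exists N0 : nat, forall n, (N0 <= n)%N ->
          (INR (Dmax (d n)) ^ 2 *
             (INR (Mtot (d n)) / INR (dsum (d n) (S n)) * ln (INR (Mtot (d n)))) ^ 12
           <= delta n * INR (dsum (d n) (S n)))%R))
  (* gamma = d(S)/M < 1 - c for a constant c > 0 *)
  (Hgamma : exists c : R, (0 < c)%R /\ exists N0 : nat, forall n, (N0 <= n)%N ->
      (INR (dsum (d n) (S n)) / INR (Mtot (d n)) < 1 - c)%R) :
  exists C : R, exists N : nat, forall n, (N <= n)%N ->
    forall v : 'I_n, v \in S n -> forall i : nat, (i < d n v)%N ->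
      exists eps : R,
        (Rabs eps <= C * (INR (Dmax (d n)) ^ 2 / INR (dsum (d n) (S n))))%R /\
        (INR #|A_set (d n) (S n) v i| =
           INR (i + 1) / INR (d n v - i)
           * (INR (dsum (d n) (~: S n)) / INR (dsum (d n) (S n)))
           * (1 + eps) * INR #|A_set (d n) (S n) v i.+1|)%R.
Proof.
case: Hdelta => delta [Hcv [[K [N1 HK]] [N2 Hbig]]].
case: Hgamma => c [hc [N3 Hg]].
pose e0 := Rmin (/ 8) (/ (Rabs K + 1)).
have e0pos : (0 < e0)%R.
  apply: Rmin_pos; apply: Rinv_0_lt_compat; first lra.
  have := Rabs_pos K; lra.
case: (Hcv e0 e0pos) => N4 HN4.
exists (8 + 3 / c)%R, (N1 + N2 + N3 + N4) => n Hn v vS i Hi.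
have [hK1 hK2] := HK n ltac:(lia).
have hB := Hbig n ltac:(lia).
have hG := Hg n ltac:(lia).
have hD : (Rabs (delta n - 0) < e0)%R.
  by apply: HN4; apply/leP; lia.
rewrite Rminus_0_r Rabs_pos_eq in hD; last lra.
have hd8 : (delta n < / 8)%R by apply: Rlt_le_trans hD (Rmin_l _ _).
have hdK : (delta n < / (Rabs K + 1))%R by apply: Rlt_le_trans hD (Rmin_r _ _).
case: (Hd n) => Hpos _.
have hsum := dsum_split (d n) (S n).
have hdv := dsum_ge (d n) vS.
have hdv1 := Hpos v.
case: (main_nat (d n) vS i) => F [H1 H2 H3 H4].
set M := Mtot (d n) in hK2 hB hG hsum *.
set s := dsum (d n) (S n) in hB hG hsum hdv H1 H2 *.
set t := dsum (d n) (~: S n) in hsum H3 H4 *.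
set Dl := Dmax (d n) in hB H1 H3 *.
have cv : forall m k, (m <= k)%N -> (INR m <= INR k)%R.
  by move=> m k h; apply: le_INR; apply/leP.
have sM : (s <= M)%N by rewrite -hsum leq_addr.
have s1 : (1 <= s)%N by apply: leq_trans hdv.
have M1 : (1 <= M)%N by apply: leq_trans sM.
have Rs : (0 < INR s)%R by apply: lt_0_INR; apply/ltP.
have RsM : (INR s <= INR M)%R by apply: cv.
have lnM := lnM_ge1 M1 hK1 hdK hK2.
have X1 : (1 <= INR M / INR s)%R.
  apply: (Rmult_le_reg_r (INR s)) => //.
  rewrite /Rdiv Rmult_assoc Rinv_l; lra.
have X12 : (1 <= (INR M / INR s * ln (INR M)) ^ 12)%R.
  apply: pow_R1_Rle. nra.
have D0 : (0 <= INR Dl ^ 2)%R by apply: pow_le; apply: pos_INR.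
have hD8 : (8 * INR Dl ^ 2 <= INR s)%R.
  have : (INR Dl ^ 2 <= delta n * INR s)%R by nra.
  nra.
have Rt : INR t = (INR M - INR s)%R.
  by rewrite -hsum plus_INR; ring.
have RM : (0 < INR M)%R by lra.
have hct : (c * INR s <= INR t)%R.
  have : (INR s < (1 - c) * INR M)%R.
    have E : INR s = (INR s / INR M * INR M)%R by field; lra.
    rewrite {1}E; apply: Rmult_lt_compat_r => //.
  nra.
have DD : (INR Dl * INR Dl)%R = (INR Dl ^ 2)%R by rewrite /=; ring.
have R4 : INR 4 = 4%R by rewrite /=; ring.
have R3 : INR 3 = 3%R by rewrite /=; ring.
have pos : (0 < INR (d n v - i))%R by apply: lt_0_INR; apply/ltP; lia.
have qos : (0 < INR (i + 1))%R by apply: lt_0_INR; apply/ltP; lia.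
move/cv: H1; move/cv: H2; move/cv: H3; move/cv: H4.
rewrite !plus_INR !mult_INR DD R4 R3 => H4 H3 H2 H1.
rewrite ?plus_INR in qos H1 H2 H3 H4 *.
apply: (real_core (F := INR F)) => //; try apply: pos_INR.
Qed.
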